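(* Let $K$ be an infinite commutative domain and $R$ an associative $K$-algebra on which $K$ acts torsion-freely. Let $m,k,n\ge0$, $\alpha_0,\dots,\alpha_n\in K$, $\alpha=\sum_{i=0}^n\alpha_iy^ixy^{n-i}$, and suppose $y^m\alpha y^k=0$ for all $x,y\in R$. (i) If $\alpha_n\neq0$ then $y^{m+n}e_ny^k=0$ for all $x,y\in R$. (ii) If $\alpha_0\ne0$ then $y^me_ny^{n+k}=0$ for all $x,y\in R$. (iii) If $\alpha_0\neq0$ and $\alpha_n\neq0$ then $y^me_{3n-1}y^k=0$ for all $x,y\in R$.
   Context: $[a,b]=ab-ba$, $e_1=[x,y]$, $e_{j+1}=[e_j,y]$, and $e_0=x$. *)

(* Defs.v *)
From HB Require Import structures.
From mathcomp Require Import all_boot all_order all_algebra.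
Set Implicit Arguments. Unset Strict Implicit. Unset Printing Implicit Defensive.
Import Order.TTheory GRing.Theory Num.Theory.
Local Open Scope ring_scope.

Record is_assoc_alg (K : comRingType) (R : lmodType K) (mul : R -> R -> R) : Prop := {
  alg_mulA : associative mul;
  alg_mulDl : left_distributive mul +%R;
  alg_mulDr : right_distributive mul +%R;
  alg_scalerAl : forall (a : K) (u v : R), mul (a *: u) v = a *: mul u v;
  alg_scalerAr : forall (a : K) (u v : R), mul u (a *: v) = a *: mul u v
}.

Definition torsion_free (K : comRingType) (R : lmodType K) : Prop :=
  forall (a : K) (v : R), a *: v = 0 -> a = 0 \/ v = 0.

Definition infinite_type (T : eqType) : Prop := forall s : seq T, exists t, t \notin s.

(* sand mul y i u j = y^i u y^j  (y^0 u = u, no unit needed) *)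
Definition sand (R : Type) (mul : R -> R -> R) (y : R) (i : nat) (u : R) (j : nat) : R :=
  iter j (fun z => mul z y) (iter i (mul y) u).

Definition comm_br (R : zmodType) (mul : R -> R -> R) (a b : R) : R := mul a b - mul b a.

Fixpoint eng (R : zmodType) (mul : R -> R -> R) (x y : R) (j : nat) : R :=
  if j is j'.+1 then comm_br mul (eng mul x y j') y else x.

Definition alpha_poly (K : comRingType) (R : lmodType K) (mul : R -> R -> R)
  (n : nat) (al : nat -> K) (x y : R) : R :=
  \sum_(i < n.+1) al i *: sand mul y i x (n - i).

(* Main.v *)
Require Import Defs.
From mathcomp Require Import all_boot all_order all_algebra.
From mathcomp Require Import ring zify.
Import GRing.Theory.
Local Open Scope ring_scope.

Section All.
Variables (K : idomainType) (R : lmodType K) (mul : R -> R -> R).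
Hypothesis hR : is_assoc_alg mul.
Hypothesis htf : torsion_free R.
Hypothesis hK : infinite_type K.
Local Notation A := {poly {poly K}}.

Lemma mulR0l z : mul 0 z = 0.
Proof.
have h := alg_mulDl hR 0 0 z; rewrite addr0 in h.
by apply: (@addrI _ (mul 0 z)); rewrite -h addr0.
Qed.

Lemma mulR0r z : mul z 0 = 0.
Proof.
have h := alg_mulDr hR z 0 0; rewrite addr0 in h.
by apply: (@addrI _ (mul z 0)); rewrite -h addr0.
Qed.

Lemma mul_suml I (r : seq I) (P : pred I) (F : I -> R) z :
  mul (\sum_(i <- r | P i) F i) z = \sum_(i <- r | P i) mul (F i) z.
Proof.
by apply: (big_morph (fun u => mul u z)); [move=> a b; exact: (alg_mulDl hR a b z) | apply: mulR0l].
Qed.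

Lemma mul_sumr I (r : seq I) (P : pred I) (F : I -> R) z :
  mul z (\sum_(i <- r | P i) F i) = \sum_(i <- r | P i) mul z (F i).
Proof.
by apply: (big_morph (fun u => mul z u)); [move=> a b; exact: (alg_mulDr hR z a b) | apply: mulR0r].
Qed.

Lemma sandSl y i u j : sand mul y i.+1 u j = mul y (sand mul y i u j).
Proof.
elim: j => [//|j IH]; rewrite /sand /= -/(sand mul y i.+1 u j) IH.
by rewrite -(alg_mulA hR).
Qed.

Lemma sandSr y i u j : sand mul y i u j.+1 = mul (sand mul y i u j) y.
Proof. by []. Qed.

Lemma sand_scale y i j c u : sand mul y i (c *: u) j = c *: sand mul y i u j.
Proof.
elim: j => [|j IH]; last by rewrite !sandSr IH (alg_scalerAl hR).
elim: i => [//|i IH]; by rewrite !sandSl IH (alg_scalerAr hR).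
Qed.

Lemma iterL_sand y i j u : iter j (mul y) (iter i (fun z => mul z y) u) = sand mul y j u i.
Proof.
elim: j => [|j IH]; first by elim: i => //= i ->.
by rewrite iterS IH sandSl.
Qed.

Definition bd (Q : A) : nat := maxn (size Q) (\max_(a < size Q) size (nth 0%R Q a))%N.

Lemma bdP (Q : A) a b : (bd Q <= a)%N \/ (bd Q <= b)%N -> Q`_a`_b = 0.
Proof.
case: (ltnP a (size Q)) => ha; last by rewrite (nth_default _ ha) coef0.
case=> h; first by move: (leq_trans (leq_maxl _ _) h); rewrite leqNgt ha.
apply: nth_default; apply: leq_trans h; apply: leq_trans (leq_maxr _ _).
have := @leq_bigmax _ (fun i : 'I_(size Q) => size (nth 0%R Q i)) (Ordinal ha); exact.
Qed.

Definition Phi (x y : R) (Q : A) : R :=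
  \sum_(a < bd Q) \sum_(b < bd Q) Q`_a`_b *: sand mul y a x b.

Lemma sum_widen (F : nat -> R) D1 D2 : (D1 <= D2)%N -> (forall a, (D1 <= a)%N -> F a = 0) ->
  \sum_(a < D1) F a = \sum_(a < D2) F a.
Proof.
move=> le hF; rewrite (big_ord_widen D2 F le) big_mkcond; apply: eq_bigr => i _.
by case: ifP => // /negbT; rewrite -leqNgt => /hF ->.
Qed.

Lemma dsum_widen (g : nat -> nat -> R) Da Db Ea Eb : (Da <= Ea)%N -> (Db <= Eb)%N ->
  (forall a b, (Da <= a)%N \/ (Db <= b)%N -> g a b = 0) ->
  \sum_(a < Da) \sum_(b < Db) g a b = \sum_(a < Ea) \sum_(b < Eb) g a b.
Proof.
move=> la lb hg.
rewrite (sum_widen (fun a => \sum_(b < Db) g a b) _ _ la); last first.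
  by move=> a ha; rewrite big1 // => b _; apply: hg; left.
apply: eq_bigr => a _; apply: sum_widen => // b hb; apply: hg; right; exact: hb.
Qed.

Lemma PhiE x y (Q : A) Da Db :
  (forall a b, (Da <= a)%N \/ (Db <= b)%N -> Q`_a`_b = 0) ->
  Phi x y Q = \sum_(a < Da) \sum_(b < Db) Q`_a`_b *: sand mul y a x b.
Proof.
move=> hQ; rewrite /Phi.
rewrite (dsum_widen (fun a b => Q`_a`_b *: sand mul y a x b) _ _ _ _ (leq_maxl (bd Q) Da) (leq_maxl (bd Q) Db)); last first.
  by move=> a b h; rewrite bdP ?scale0r.
rewrite [RHS](dsum_widen (fun a b => Q`_a`_b *: sand mul y a x b) _ _ _ _ (leq_maxr (bd Q) Da) (leq_maxr (bd Q) Db)) //.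
by move=> a b h; rewrite hQ ?scale0r.
Qed.

Lemma Phi0 x y : Phi x y 0 = 0.
Proof. by rewrite (PhiE x y _ 0 0) ?big_ord0 // => a b _; rewrite coef0 coef0. Qed.

Lemma PhiD x y (P Q : A) : Phi x y (P + Q) = Phi x y P + Phi x y Q.
Proof.
set D := maxn (bd P) (bd Q).
have hP : forall a b, (D <= a)%N \/ (D <= b)%N -> P`_a`_b = 0.
  by move=> a b [h|h]; apply: bdP; [left|right]; apply: leq_trans h; apply: leq_maxl.
have hQ : forall a b, (D <= a)%N \/ (D <= b)%N -> Q`_a`_b = 0.
  by move=> a b [h|h]; apply: bdP; [left|right]; apply: leq_trans h; apply: leq_maxr.
rewrite (PhiE _ _ _ D D); last by move=> a b h; rewrite !coefD hP ?hQ ?addr0.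
rewrite (PhiE _ _ _ _ _ hP) (PhiE _ _ _ _ _ hQ) -big_split; apply: eq_bigr => a _.
rewrite -big_split; apply: eq_bigr => b _; by rewrite !coefD scalerDl.
Qed.

Lemma Phi_sum x y I (r : seq I) (P : pred I) (F : I -> A) :
  Phi x y (\sum_(i <- r | P i) F i) = \sum_(i <- r | P i) Phi x y (F i).
Proof. by apply: (big_morph (Phi x y)); [apply: PhiD | apply: Phi0]. Qed.

Definition cK (c : K) : A := c%:P%:P.

Lemma Phi_scale x y c (Q : A) : Phi x y (cK c * Q) = c *: Phi x y Q.
Proof.
rewrite (PhiE _ _ _ (bd Q) (bd Q)); last by move=> a b h; rewrite !coefCM bdP ?mulr0.
rewrite /Phi scaler_sumr; apply: eq_bigr => a _; rewrite scaler_sumr; apply: eq_bigr => b _.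
by rewrite !coefCM scalerA.
Qed.

Lemma PhiN x y (Q : A) : Phi x y (- Q) = - Phi x y Q.
Proof. by apply/eqP; rewrite -subr_eq0 opprK -PhiD addNr Phi0. Qed.

Lemma PhiB x y (P Q : A) : Phi x y (P - Q) = Phi x y P - Phi x y Q.
Proof. by rewrite PhiD PhiN. Qed.

Lemma Phi_S x y (Q : A) : Phi x y ('X * Q) = mul y (Phi x y Q).
Proof.
set D := bd Q.
rewrite (PhiE _ _ _ D.+1 D); last first.
  move=> a b h; rewrite coefXM; case: eqP => [//|/eqP a0]; first by rewrite coef0.
  apply: bdP; case: h => h; [left|right => //]; by rewrite -ltnS prednK // lt0n.
rewrite big_ord_recl /=.
have -> : \sum_(b < D) ('X * Q)`_0`_b *: sand mul y 0 x b = 0.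
  by rewrite big1 // => b _; rewrite coefXM eqxx coef0 scale0r.
rewrite add0r (PhiE _ _ _ D D) ?mul_sumr; last by move=> a b h; apply: bdP.
apply: eq_bigr => a _; rewrite mul_sumr; apply: eq_bigr => b _.
by rewrite coefXM /= (alg_scalerAr hR) -sandSl.
Qed.

Lemma Phi_T x y (Q : A) : Phi x y ('X%:P * Q) = mul (Phi x y Q) y.
Proof.
set D := bd Q.
rewrite (PhiE _ _ _ D D.+1); last first.
  move=> a b h; rewrite coefCM coefXM; case: eqP => [//|/eqP b0].
  apply: bdP; case: h => h; [left => //|right]; by rewrite -ltnS prednK // lt0n.
rewrite /Phi mul_suml; apply: eq_bigr => a _; rewrite mul_suml.
rewrite big_ord_recl !coefCM coefXM eqxx scale0r add0r; apply: eq_bigr => b _.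
by rewrite coefXM /= (alg_scalerAl hR) -sandSr.
Qed.

Lemma Phi1 x y : Phi x y 1 = x.
Proof.
rewrite (PhiE _ _ _ 1 1); last first.
  move=> a b [h|h]; rewrite coef1; first by case: a h => // a _; rewrite coef0.
  case: a => [|a]; last by rewrite coef0.
  by rewrite coef1; case: b h.
by rewrite !big_ord1 !coef1 scale1r.
Qed.


Definition Zp (Q : A) := forall x y, Phi x y Q = 0.

Lemma Zp0 : Zp 0.
Proof. by move=> x y; apply: Phi0. Qed.

Lemma ZpD P Q : Zp P -> Zp Q -> Zp (P + Q).
Proof. by move=> hP hQ x y; rewrite PhiD hP hQ addr0. Qed.

Lemma ZpN Q : Zp Q -> Zp (- Q).
Proof. by move=> hQ x y; rewrite PhiN hQ oppr0. Qed.

Lemma ZpB P Q : Zp P -> Zp Q -> Zp (P - Q).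
Proof. by move=> hP hQ; apply: ZpD => //; apply: ZpN. Qed.

Lemma Zp_sum I (r : seq I) (P : pred I) (F : I -> A) :
  (forall i, P i -> Zp (F i)) -> Zp (\sum_(i <- r | P i) F i).
Proof. by move=> h; apply: (big_ind Zp) => //; [apply: Zp0 | apply: ZpD]. Qed.

Lemma ZpS Q : Zp Q -> Zp ('X * Q).
Proof. by move=> hQ x y; rewrite Phi_S hQ mulR0r. Qed.

Lemma ZpT Q : Zp Q -> Zp ('X%:P * Q).
Proof. by move=> hQ x y; rewrite Phi_T hQ mulR0l. Qed.

Lemma ZpC c Q : Zp Q -> Zp (cK c * Q).
Proof. by move=> hQ x y; rewrite Phi_scale hQ scaler0. Qed.

Lemma ZpCinv c Q : c != 0 -> Zp (cK c * Q) -> Zp Q.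
Proof.
move=> c0 hQ x y; have := hQ x y; rewrite Phi_scale => /htf [h|//].
by rewrite h eqxx in c0.
Qed.

Lemma ZpM P Q : Zp Q -> Zp (P * Q).
Proof.
move=> hQ; elim/poly_ind: P => [|p c IH]; first by rewrite mul0r; apply: Zp0.
rewrite mulrDl -mulrA mulrCA; apply: ZpD; first exact: ZpS.
elim/poly_ind: c => [|c d IHc]; first by rewrite polyC0 mul0r; apply: Zp0.
rewrite rmorphD rmorphM /= mulrDl -mulrA mulrCA; apply: ZpD; first exact: ZpT.
exact: ZpC.
Qed.

Lemma Phi_pow (Ls Rt : A) (z x y : R) :
  (forall Q, Phi x y (Ls * Q) = mul z (Phi x y Q)) ->
  (forall Q, Phi x y (Rt * Q) = mul (Phi x y Q) z) ->
  forall a b Q, Phi x y (Ls ^+ a * Rt ^+ b * Q) = sand mul z a (Phi x y Q) b.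
Proof.
move=> hL hT a b Q; elim: b => [|b IH].
  rewrite expr0 mulr1; elim: a => [|a IH]; first by rewrite expr0 mul1r.
  by rewrite exprS -mulrA hL IH -sandSl.
by rewrite exprS mulrCA -mulrA hT IH.
Qed.

Lemma Phi_ST x y a b Q : Phi x y ('X ^+ a * 'X%:P ^+ b * Q) = sand mul y a (Phi x y Q) b.
Proof. by apply: Phi_pow => Q'; [apply: Phi_S | apply: Phi_T]. Qed.

Lemma Phi_U x y j : Phi x y (('X%:P - 'X) ^+ j) = eng mul x y j.
Proof.
elim: j => [|j IH]; first by rewrite expr0 Phi1.
by rewrite exprS mulrBl PhiB Phi_T Phi_S IH.
Qed.

Lemma distinct_pts D : exists l : seq K, uniq l /\ size l = D.
Proof.
elim: D => [|D [l [ul sl]]]; first by exists [::].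
have [t ht] := hK l; exists (t :: l); by rewrite /= ht ul sl.
Qed.

Lemma extract (D : nat) (v : nat -> R) :
  (forall c : K, \sum_(j < D) c ^+ j *: v j = 0) -> forall j, (j < D)%N -> v j = 0.
Proof.
move=> hv j hj.
have [l [ul sl]] := distinct_pts D.
pose a : 'rV[K]_D := \row_(i < D) nth 0 l i.
pose V := Vandermonde D a.
have col : forall i : 'I_D, \sum_(r < D) V r i *: v r = 0.
  move=> i; rewrite -[RHS](hv (a 0 i)); apply: eq_bigr => r _; by rewrite !mxE.
have key : \det V *: v j = 0.
  have -> : \det V *: v j = \sum_(r < D) (V *m \adj V) r (Ordinal hj) *: v r.
    rewrite mul_mx_adj (bigD1 (Ordinal hj)) //= big1 ?addr0; first by rewrite mxE eqxx mulr1n.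
    by move=> i ni; rewrite mxE (negbTE ni) mulr0n scale0r.
  under eq_bigr do rewrite mxE scaler_suml.
  rewrite exchange_big /= big1 // => i _.
  transitivity (\adj V i (Ordinal hj) *: \sum_(r < D) V r i *: v r); last by rewrite col scaler0.
  by rewrite scaler_sumr; apply: eq_bigr => r _; rewrite scalerA mulrC.
have detn0 : \det V != 0.
  rewrite det_Vandermonde; apply/prodf_neq0 => i _; apply/prodf_neq0 => k ik.
  rewrite subr_eq0 !mxE; apply/negP => /eqP e.
  move/eqP: e; rewrite (@nth_uniq _ 0 l k i) ?sl // => /eqP ki.
  by move: ik; rewrite -ki ltnn.
by case: (htf _ _ key) => // h; rewrite h eqxx in detn0.
Qed.

Lemma cKM a b : cK (a * b) = cK a * cK b.
Proof. by rewrite /cK !rmorphM. Qed.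

Lemma cKX c i : cK c ^+ i = cK (c ^+ i).
Proof. by rewrite /cK !rmorphXn. Qed.

Lemma Zp_extract (M : A) (q : {poly A}) :
  (forall c : K, Zp (M * q.[cK c])) -> forall j, Zp (M * q`_j).
Proof.
move=> h j x y; case: (ltnP j (size q)) => hj; last first.
  by rewrite nth_default // mulr0 Phi0.
apply: (@extract (size q) (fun j => Phi x y (M * q`_j)) _ j hj) => c.
rewrite -[RHS](h c x y) horner_coef mulr_sumr Phi_sum; apply: eq_bigr => i _.
by rewrite cKX mulrA [_ * cK _]mulrC Phi_scale.
Qed.


Section P1.
Variables (m k n : nat) (al : nat -> K).
Hypothesis hyp : forall x y : R, sand mul y m (alpha_poly mul n al x y) k = 0.

Let S : A := 'X.
Let T : A := 'X%:P.
Let M : A := S ^+ m * T ^+ k.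
Let E1 : {poly A} := 1 + 'X * S%:P.
Let E2 : {poly A} := 1 + 'X * T%:P.
Let q : {poly A} := \sum_(i < n.+1) (cK (al i) * S ^+ i * T ^+ (n - i))%:P * (E1 ^+ (m + i) * E2 ^+ ((n - i) + k)).

Lemma stepA c : Zp (M * q.[cK c]).
Proof.
set Ys : A := S * (1 + cK c * S).
set Yt : A := T * (1 + cK c * T).
have -> : M * q.[cK c] = Ys ^+ m * Yt ^+ k * \sum_(i < n.+1) cK (al i) * (Ys ^+ i * Yt ^+ (n - i) * 1).
  rewrite /q horner_sum !mulr_sumr; apply: eq_bigr => i _.
  rewrite !hornerE /Ys /Yt /M !exprMn !exprD; rewrite /=; ring.
move=> x y; set z := y + c *: mul y y.
rewrite (Phi_pow _ _ z).
- rewrite Phi_sum.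
  have -> : \sum_(i < n.+1) Phi x y (cK (al i) * (Ys ^+ i * Yt ^+ (n - i) * 1)) = alpha_poly mul n al x z.
    apply: eq_bigr => i _; rewrite Phi_scale.
    rewrite (Phi_pow _ _ z) ?Phi1 // => Q.
    + rewrite /Ys mulrDr mulr1 mulrDl PhiD Phi_S -!mulrA Phi_S Phi_scale Phi_S.
      by rewrite /z (alg_mulDl hR) (alg_scalerAl hR) -(alg_mulA hR) (alg_scalerAr hR).
    + rewrite /Yt mulrDr mulr1 mulrDl PhiD Phi_T -!mulrA Phi_T Phi_scale Phi_T.
      by rewrite /z (alg_mulDr hR) (alg_scalerAr hR) (alg_mulA hR) (alg_scalerAl hR).
  exact: hyp.
- move=> Q; rewrite /Ys mulrDr mulr1 mulrDl PhiD Phi_S -!mulrA Phi_S Phi_scale Phi_S.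
  by rewrite /z (alg_mulDl hR) (alg_scalerAl hR) -(alg_mulA hR) (alg_scalerAr hR).
- move=> Q; rewrite /Yt mulrDr mulr1 mulrDl PhiD Phi_T -!mulrA Phi_T Phi_scale Phi_T.
  by rewrite /z (alg_mulDr hR) (alg_scalerAr hR) (alg_mulA hR) (alg_scalerAl hR).
Qed.

Let W (c : nat) : {poly A} := E1 ^+ m * E2 ^+ k * E2 ^+ (n - c).
Let H (c : nat) : A := \sum_(i < n.+1) cK (al i) * ('C(i, c))%:R * S ^+ i * T ^+ (n - i).
Let G (c : nat) : A := (S - T) ^+ c * H c.

Lemma stepC : q = \sum_(c < n.+1) ('X ^+ c * W c) * (G c)%:P.
Proof.
have e1 : E1 = E2 + 'X * (S - T)%:P.
  rewrite /E1 /E2 rmorphB /=; move: ('X : {poly A}) (S%:P : {poly A}) (T%:P : {poly A}) => X s t; ring.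
have binom : forall i, (i <= n)%N -> E1 ^+ i =
    \sum_(c < n.+1) (E2 ^+ (i - c) * ('X * (S - T)%:P) ^+ c) *+ 'C(i, c).
  move=> i hi; have hi' : (i.+1 <= n.+1)%N by []; rewrite e1 exprDn.
  rewrite (big_ord_widen n.+1 (fun c => (E2 ^+ (i - c) * ('X * (S - T)%:P) ^+ c) *+ 'C(i, c)) hi').
  rewrite big_mkcond; apply: eq_bigr => c _; case: ifP => [_|/negbT]; first by [].
  rewrite -leqNgt => h.
  by rewrite bin_small ?mulr0n.
transitivity (\sum_(i < n.+1) \sum_(c < n.+1) ('X ^+ c * W c) *
    (cK (al i) * ('C(i, c))%:R * (S - T) ^+ c * S ^+ i * T ^+ (n - i))%:P).
  rewrite /q; apply: eq_bigr => i _.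
  have hin : (i <= n)%N by rewrite -ltnS.
  rewrite exprD (binom i hin).
  rewrite mulr_sumr mulr_suml mulr_sumr; apply: eq_bigr => c _.
  case: (leqP c i) => hci; last first.
    rewrite bin_small; last by [].
    rewrite !(mulr0n, mulr0, mul0r, polyC0).
    by [].
  rewrite /W; have -> : (n - c = (i - c) + (n - i))%N by rewrite addnC addnBA // subnK // (leq_trans hci hin).
  rewrite !exprD exprMn -mulr_natr !rmorphM !rmorphXn /= rmorph_nat.
  move: ((cK (al i))%:P) (S%:P) (T%:P) E1 E2 ('X : {poly A}) ((S - T)%:P) ('C(i, c)%:R : {poly A}).
  by move=> a sp tp f1 f2 X u b; ring.
rewrite exchange_big /=; apply: eq_bigr => c _.
rewrite -mulr_sumr -rmorph_sum /G /H mulr_sumr; congr (_ * _%:P); apply: eq_bigr => i _.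
rewrite /=; ring.
Qed.

Lemma W0 c : (W c)`_0 = 1.
Proof.
rewrite -horner_coef0 /W /E1 /E2 !hornerM !horner_exp !hornerD !hornerM !hornerC hornerX.
by rewrite !mul0r !addr0 !expr1n !mulr1.
Qed.

Lemma stepD c0 : q`_c0 = \sum_(c < n.+1) ('X ^+ c * W c)`_c0 * G c.
Proof.
rewrite {1}stepC coef_sum; apply: eq_bigr => c _; by rewrite coefMC.
Qed.

Lemma stepB j : Zp (M * q`_j).
Proof. by apply: Zp_extract => c; apply: stepA. Qed.

Lemma stepE c0 : (c0 <= n)%N -> Zp (M * G c0).
Proof.
elim/ltn_ind: c0 => c0 IH hc0.
have hc0' : (c0 < n.+1)%N by [].
have eG : G c0 = \sum_(c < n.+1) (if (c : nat) == c0 then G c else 0).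
  rewrite -big_mkcond (big_pred1 (Ordinal hc0')) //= => c.
have -> : M * G c0 = M * q`_c0 - M * (q`_c0 - G c0) by rewrite mulrBr opprB addrC subrK.
apply: ZpB; first exact: stepB.
rewrite eG stepD -sumrB mulr_sumr; apply: Zp_sum => c _.
rewrite coefXnM.
case: (ltngtP c0 c) => h.
- by rewrite subr0 mul0r mulr0; apply: Zp0.
- rewrite subr0 mulrCA; apply: ZpM; apply: IH => //.
  by apply: leq_trans (ltnW h) hc0.
- by rewrite h subnn W0 mul1r subrr mulr0; apply: Zp0.
Qed.

Lemma Hn : H n = cK (al n) * S ^+ n.
Proof.
rewrite /H big_ord_recr /= big1 ?add0r.
  by rewrite binn subnn expr0 mulr1 mulr1.
by move=> i _; rewrite bin_small // mulr0 !mul0r.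
Qed.

Lemma part1 : al n != 0 -> forall x y, sand mul y (m + n) (eng mul x y n) k = 0.
Proof.
move=> an x y.
have h := stepE n (leqnn n).
have e : M * G n = cK (al n * (-1) ^+ n) * ('X ^+ (m + n) * 'X%:P ^+ k * ('X%:P - 'X) ^+ n).
  rewrite /G Hn /M.
  have -> : S - T = cK (-1) * ('X%:P - 'X) by rewrite /cK !rmorphN1 mulN1r opprB.
  rewrite exprMn cKX /S /T exprD.
  have -> : cK (al n * (-1) ^+ n) = cK (al n) * cK ((-1) ^+ n) by rewrite /cK !rmorphM.
  move: (cK (al n)) (cK ((-1) ^+ n)) ('X : A) ('X%:P : A) => a b X Y; ring.
rewrite e in h.
have := h x y; rewrite Phi_scale Phi_ST Phi_U => /htf [|//].
by move/eqP; rewrite mulf_eq0 (negbTE an) signr_eq0.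
Qed.

End P1.

Lemma part3 m k n : (0 < n)%N ->
  (forall x y, sand mul y (m + n) (eng mul x y n) k = 0) ->
  (forall x y, sand mul y m (eng mul x y n) (n + k) = 0) ->
  forall x y, sand mul y m (eng mul x y (3 * n - 1)) k = 0.
Proof.
move=> n0 h1 h2.
set U : A := 'X%:P - 'X.
have Z1 : Zp ('X ^+ (m + n) * 'X%:P ^+ k * U ^+ n) by move=> x y; rewrite Phi_ST Phi_U h1.
have Z2 : Zp ('X ^+ m * 'X%:P ^+ (n + k) * U ^+ n) by move=> x y; rewrite Phi_ST Phi_U h2.
suff Z : Zp ('X ^+ m * 'X%:P ^+ k * U ^+ (3 * n - 1)).
  by move=> x y; rewrite -Phi_U -Phi_ST; apply: Z.
set N := (n.-1 + n)%N.
have -> : (3 * n - 1 = n + N)%N by rewrite /N; move: n0; clear; lia.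
rewrite exprD mulrA.
have -> : U ^+ N = ('X%:P + (- 'X)) ^+ N by [].
rewrite [X in _ * X]exprDn mulr_sumr; apply: Zp_sum => i _.
case: (leqP n i) => hni.
- have e : (i : nat) = ((i - n) + n)%N by rewrite subnK.
  rewrite [in (- 'X) ^+ i]e exprD [(- 'X) ^+ n]exprNn -mulr_natr.
  set t := 'C(N, i)%:R.
  have -> : 'X ^+ m * 'X%:P ^+ k * U ^+ n *
      ('X%:P ^+ (N - i) * ((- 'X) ^+ (i - n) * ((-1) ^+ n * 'X ^+ n)) * t) =
      ('X%:P ^+ (N - i) * (- 'X) ^+ (i - n) * (-1) ^+ n * t) * ('X ^+ (m + n) * 'X%:P ^+ k * U ^+ n).
    clear Z1 Z2; rewrite exprD; move: ('X : A) ('X%:P : A) ((- 'X : A) ^+ (i - n)) t U => X Y a b u; ring.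
  by apply: ZpM.
- have pn : n = n.-1.+1 by rewrite prednK.
  have e : (N - i = (N - i - n) + n)%N by rewrite subnK // /N; move: pn hni; move: (n.-1) (i : nat) => p j; clear; lia.
  rewrite e exprD -mulr_natr.
  set t := 'C(N, i)%:R.
  have -> : 'X ^+ m * 'X%:P ^+ k * U ^+ n *
      ('X%:P ^+ (N - i - n) * 'X%:P ^+ n * (- 'X) ^+ i * t) =
      ('X%:P ^+ (N - i - n) * (- 'X) ^+ i * t) * ('X ^+ m * 'X%:P ^+ (n + k) * U ^+ n).
    clear Z1 Z2; rewrite exprD; move: ('X : A) ('X%:P : A) ((- 'X : A) ^+ i) t U => X Y a b u; ring.
  by apply: ZpM.
Qed.

End All.

Arguments part1 {K R mul}.
Arguments part3 {K R mul}.
Arguments sand_scale {K R mul}.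
Arguments iterL_sand {K R mul}.

Section Opp.
Variables (K : idomainType) (R : lmodType K) (mul : R -> R -> R).
Hypothesis hR : is_assoc_alg mul.

Definition mulop (a b : R) : R := mul b a.

Lemma op_assoc : is_assoc_alg mulop.
Proof.
constructor; rewrite /mulop.
- by move=> a b c; rewrite (alg_mulA hR).
- by move=> a b c; rewrite (alg_mulDr hR).
- by move=> a b c; rewrite (alg_mulDl hR).
- by move=> a u v; rewrite (alg_scalerAr hR).
- by move=> a u v; rewrite (alg_scalerAl hR).
Qed.

Lemma sand_op y i u j : sand mulop y i u j = sand mul y j u i.
Proof. by rewrite -(iterL_sand hR). Qed.

Lemma eng_op x y n : eng mulop x y n = (-1) ^+ n *: eng mul x y n.
Proof.
elim: n => [|n IH]; first by rewrite scale1r.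
rewrite /= IH /comm_br /mulop (alg_scalerAr hR) (alg_scalerAl hR) -scalerBr.
by rewrite exprS -scalerA scaleN1r -scalerN opprB.
Qed.

Lemma alpha_op n al x y :
  alpha_poly mulop n al x y = alpha_poly mul n (fun i => al (n - i)%N) x y.
Proof.
rewrite /alpha_poly [RHS](reindex_inj rev_ord_inj) /=; apply: eq_bigr => i _.
rewrite sand_op subSS subKn //; by rewrite -ltnS.
Qed.

End Opp.
Arguments mulop {K R}.
Arguments op_assoc {K R mul}.
Arguments sand_op {K R mul}.
Arguments eng_op {K R mul}.
Arguments alpha_op {K R mul}.

Theorem lemma2p3 (K : idomainType) (R : lmodType K) (mul : R -> R -> R)
  (hK : infinite_type K) (hR : is_assoc_alg mul) (htf : torsion_free R)
  (m k n : nat) (al : nat -> K)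
  (hyp : forall x y : R, sand mul y m (alpha_poly mul n al x y) k = 0) :
  (al n != 0 -> forall x y : R, sand mul y (m + n) (eng mul x y n) k = 0) /\
  (al 0%N != 0 -> forall x y : R, sand mul y m (eng mul x y n) (n + k) = 0) /\
  (al 0%N != 0 -> al n != 0 -> forall x y : R, sand mul y m (eng mul x y (3 * n - 1)) k = 0).
Proof.
have P1 := part1 hR htf hK _ _ _ _ hyp.
have P2 : al 0%N != 0 -> forall x y : R, sand mul y m (eng mul x y n) (n + k) = 0.
  move=> a0 x y.
  have hop := op_assoc hR.
  have hyp' : forall x y, sand (mulop mul) y k (alpha_poly (mulop mul) n (fun i => al (n - i)%N) x y) m = 0.
    move=> x' y'; rewrite (sand_op hR) (alpha_op hR) -[RHS](hyp x' y'); congr (sand mul y' m _ k).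
    rewrite /alpha_poly; apply: eq_bigr => i _; rewrite subKn //; by rewrite -ltnS.
  have := part1 hop htf hK _ _ _ _ hyp'; rewrite subnn => /(_ a0 x y).
  rewrite (sand_op hR) (eng_op hR) (sand_scale hR) addnC => /htf [|//].
  by move/eqP; rewrite signr_eq0.
split => //; split => //.
move=> a0 an x y; case: (posnP n) => [n0|n0].
  by move: (P1 an x y); rewrite n0 addn0.
exact: (part3 hR _ _ _ n0 (P1 an) (P2 a0)).
Qed.
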